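(* Let $d\mu(x)=e^{-V(x)}\,dx$ be a probability measure on $\mathbb R$ with $V$ smooth and even. Assume that $V$ is concave on $(R,+\infty)$ for some $R>0$ and that $V''(x)/V'(x)^2\to r$ as $x\to\infty$ for some $r>-1/2$. Then there exist $S>R$ and $C>0$ such that for all smooth $g$, $$\mathrm{Var}_\mu(g)\le C\int|g'(x)|^2\Big(1+\frac{\mathbf 1_{|x|>S}}{V'(x)^2}\Big)d\mu(x),\qquad \int|g-m|\,d\mu\le C\int|g'(x)|\Big(1+\frac{\mathbf 1_{|x|>S}}{|V'(x)|}\Big)d\mu(x),$$ where $m$ is a median of $g$ under $\mu$. *)

(* Defs.v *)
From Stdlib Require Import Reals Lra.
Open Scope R_scope.

Definition smooth (f : R -> R) : Prop :=
  exists D : nat -> R -> R,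
    (forall x, D O x = f x) /\
    (forall n x, derivable_pt_lim (D n) x (D (S n) x)).

Definition improper_int (f : R -> R) (l : R) : Prop :=
  exists pr : forall a b, Riemann_integrable f a b,
    forall eps, 0 < eps -> exists M, forall a b,
      a < - M -> M < b -> Rabs (RiemannInt (pr a b) - l) < eps.

(* mu(A) >= c for the measure d mu = exp(-V) dx and a closed set A,
   via outer regularity: every continuous phi with 1_A <= phi <= 1
   has integral >= c. *)
Definition measure_closed_ge (V : R -> R) (A : R -> Prop) (c : R) : Prop :=
  forall phi : R -> R,
    continuity phi ->
    (forall x, 0 <= phi x <= 1) ->
    (forall x, A x -> phi x = 1) ->
    forall l, improper_int (fun x => phi x * exp (- V x)) l -> c <= l.

Definition is_median (V g : R -> R) (m : R) : Prop :=
  measure_closed_ge V (fun x => m <= g x) (1/2) /\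
  measure_closed_ge V (fun x => g x <= m) (1/2).

Definition tail_weight (S : R) (w : R) (x : R) : R :=
  if Rlt_dec S (Rabs x) then / w else 0.

(* Main.v *)
Require Import Defs.
From Stdlib Require Import Reals Lra Lia Psatz FunctionalExtensionality.
Open Scope R_scope.
Lemma exp_le_exp x y : x <= y -> exp x <= exp y.
Proof. intros H. destruct H as [H|H]; [apply Rlt_le, exp_increasing; auto|subst; lra]. Qed.

Definition ri_cont (f : R -> R) (Hc : forall x, continuity_pt f x) (a b : R) :
  Riemann_integrable f a b.
Proof.
  destruct (Rle_dec a b) as [H|H].
  - apply continuity_implies_RiemannInt; auto.
  - apply RiemannInt_P1; apply continuity_implies_RiemannInt; auto; lra.
Defined.

Lemma cont_eps (f : R -> R) x : continuity_pt f x ->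
  forall eps, 0 < eps -> exists alp, 0 < alp /\ forall y, Rabs (y - x) < alp -> Rabs (f y - f x) < eps.
Proof.
  intros Hc eps He. destruct (Hc eps He) as [alp [Ha H]]. exists alp; split; auto.
  intros y Hy. destruct (Req_dec y x) as [->|Hne].
  - rewrite Rminus_diag, Rabs_R0; auto.
  - apply (H y). split; [split; [constructor|auto] | exact Hy].
Qed.

Lemma deriv_int (f : R -> R) (Hc : forall x, continuity_pt f x) a x :
  derivable_pt_lim (fun y => RiemannInt (ri_cont f Hc a y)) x (f x).
Proof.
  intros eps He.
  destruct (cont_eps f x (Hc x) (eps/2)) as [alp [Ha Hal]]; [lra|].
  exists (mkposreal alp Ha). simpl. intros h Hh0 Hh.
  assert (E : RiemannInt (ri_cont f Hc a (x + h)) - RiemannInt (ri_cont f Hc a x)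
           = RiemannInt (ri_cont f Hc x (x+h))).
  { rewrite <- (RiemannInt_P26 (ri_cont f Hc a x) (ri_cont f Hc x (x+h)) (ri_cont f Hc a (x+h))). ring. }
  rewrite E.
  assert (Hb : forall y, Rmin x (x+h) < y < Rmax x (x+h) -> f x - eps/2 <= f y <= f x + eps/2).
  { intros y Hy. assert (Rabs (y - x) < alp).
    { unfold Rmin, Rmax in Hy. destruct (Rle_dec x (x+h)); apply Rabs_def1;
      pose proof (Rabs_def2 _ _ Hh) as [? ?]; lra. }
    specialize (Hal y H). apply Rabs_def2 in Hal. lra. }
  destruct (Rle_dec 0 h) as [Hp|Hn].
  - assert (Hp' : 0 < h) by lra.
    assert (Hxx : x <= x + h) by lra.
    pose proof (RiemannInt_const_bound (l:=f x - eps/2) (u:=f x + eps/2) (ri_cont f Hc x (x+h)) Hxx) as Hcb.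
    destruct Hcb as [H1 H2].
    { intros y Hy. apply Hb. unfold Rmin, Rmax. destruct (Rle_dec x (x+h)); lra. }
    apply Rabs_def1.
    + apply (Rmult_lt_reg_r h); auto. unfold Rdiv. rewrite Rmult_minus_distr_r, Rmult_assoc, Rinv_l by lra. nra.
    + apply (Rmult_lt_reg_r h); auto. unfold Rdiv. rewrite Rmult_minus_distr_r, Rmult_assoc, Rinv_l by lra. nra.
  - assert (Hp' : h < 0) by lra.
    assert (Hxx : x + h <= x) by lra.
    pose proof (RiemannInt_const_bound (l:=f x - eps/2) (u:=f x + eps/2) (ri_cont f Hc (x+h) x) Hxx) as Hcb.
    destruct Hcb as [H1 H2].
    { intros y Hy. apply Hb. unfold Rmin, Rmax. destruct (Rle_dec x (x+h)); lra. }
    rewrite (RiemannInt_P8 (ri_cont f Hc x (x+h)) (ri_cont f Hc (x+h) x)).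
    set (I := RiemannInt (ri_cont f Hc (x + h) x)) in *.
    replace (- I / h - f x) with ((I - f x * (x - (x+h))) / (x - (x + h))) by (field; lra).
    apply Rabs_def1.
    + apply (Rmult_lt_reg_r (x - (x+h))); [lra|]. unfold Rdiv. rewrite Rmult_assoc, Rinv_l by lra. nra.
    + apply (Rmult_lt_reg_r (x - (x+h))); [lra|]. unfold Rdiv. rewrite Rmult_assoc, Rinv_l by lra. nra.
Qed.

Lemma prim_exists (f : R -> R) : (forall x, continuity_pt f x) ->
  exists F, forall x, derivable_pt_lim F x (f x).
Proof. intros Hc. eexists. intro x. apply (deriv_int f Hc 0). Qed.

Lemma mono_le (F f : R -> R) a b : a <= b ->
  (forall c, a <= c <= b -> derivable_pt_lim F c (f c)) ->
  (forall c, a <= c <= b -> 0 <= f c) -> F a <= F b.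
Proof.
  intros Hab Hd Hp. destruct (Req_dec a b) as [->|Hne]; [lra|].
  destruct (MVT_cor2 F f a b) as [c [Hc1 Hc2]]; [lra|auto|].
  assert (0 <= f c) by (apply Hp; lra). nra.
Qed.

Lemma const_deriv0 (F : R -> R) a b : (forall x, derivable_pt_lim F x 0) -> F a = F b.
Proof.
  intros Hd. destruct (Rle_dec a b).
  - apply Rle_antisym.
    + apply (mono_le F (fun _ => 0)); auto; intros; lra.
    + assert (H := mono_le (fun x => - F x) (fun _ => 0) a b r).
      cut (- F a <= - F b); [lra|]. apply H; [|intros; lra].
      intros c _. replace 0 with (-0) by ring. apply derivable_pt_lim_opp. auto.
  - apply Rle_antisym.
    + assert (H := mono_le (fun x => - F x) (fun _ => 0) b a ltac:(lra)).
      cut (- F b <= - F a); [lra|]. apply H; [|intros; lra].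
      intros c _. replace 0 with (-0) by ring. apply derivable_pt_lim_opp. auto.
    + apply (mono_le F (fun _ => 0)); auto; intros; lra.
Qed.

Lemma FTC (f F : R -> R) : (forall x, continuity_pt f x) ->
  (forall x, derivable_pt_lim F x (f x)) ->
  forall a b (pr : Riemann_integrable f a b), RiemannInt pr = F b - F a.
Proof.
  intros Hc Hd a b pr.
  set (G := fun y => RiemannInt (ri_cont f Hc a y)).
  assert (E : G b - F b = G a - F a).
  { apply (const_deriv0 (fun y => G y - F y)). intro x. replace 0 with (f x - f x) by ring.
    apply derivable_pt_lim_minus; [apply deriv_int | auto]. }
  assert (G a = 0) by (apply RiemannInt_P9).
  rewrite (RiemannInt_P5 pr (ri_cont f Hc a b)). fold (G b). lra.
Qed.
Definition limp (F : R -> R) (L : R) := forall eps, 0 < eps -> exists M, forall x, M < x -> Rabs (F x - L) < eps.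
Definition limm (F : R -> R) (L : R) := forall eps, 0 < eps -> exists M, forall x, x < - M -> Rabs (F x - L) < eps.

Lemma le_eps x y : (forall eps, 0 < eps -> x <= y + eps) -> x <= y.
Proof.
  intros H. destruct (Rle_dec x y); auto. specialize (H ((x - y)/2) ltac:(lra)). lra.
Qed.

Lemma limp_plus F G a b : limp F a -> limp G b -> limp (fun x => F x + G x) (a + b).
Proof.
  intros H1 H2 eps He. destruct (H1 (eps/2)) as [M1 HM1]; [lra|]. destruct (H2 (eps/2)) as [M2 HM2]; [lra|].
  exists (Rmax M1 M2). intros x Hx. pose proof (Rmax_l M1 M2). pose proof (Rmax_r M1 M2).
  specialize (HM1 x ltac:(lra)). specialize (HM2 x ltac:(lra)).
  apply Rabs_def2 in HM1; apply Rabs_def2 in HM2. apply Rabs_def1; lra.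
Qed.
Lemma limm_plus F G a b : limm F a -> limm G b -> limm (fun x => F x + G x) (a + b).
Proof.
  intros H1 H2 eps He. destruct (H1 (eps/2)) as [M1 HM1]; [lra|]. destruct (H2 (eps/2)) as [M2 HM2]; [lra|].
  exists (Rmax M1 M2). intros x Hx. pose proof (Rmax_l M1 M2). pose proof (Rmax_r M1 M2).
  specialize (HM1 x ltac:(lra)). specialize (HM2 x ltac:(lra)).
  apply Rabs_def2 in HM1; apply Rabs_def2 in HM2. apply Rabs_def1; lra.
Qed.
Lemma limp_scal F c a : limp F a -> limp (fun x => c * F x) (c * a).
Proof.
  intros H1 eps He. destruct (H1 (eps / (Rabs c + 1))) as [M1 HM1].
  { apply Rdiv_lt_0_compat; auto. pose proof (Rabs_pos c); lra. }
  exists M1. intros x Hx. specialize (HM1 x Hx).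
  replace (c * F x - c * a) with (c * (F x - a)) by ring. rewrite Rabs_mult.
  pose proof (Rabs_pos c). pose proof (Rabs_pos (F x - a)).
  assert (Rabs (F x - a) * (Rabs c + 1) < eps).
  { apply (Rmult_lt_compat_r (Rabs c + 1)) in HM1; [|lra]. unfold Rdiv in HM1. rewrite Rmult_assoc, Rinv_l in HM1; lra. }
  nra.
Qed.
Lemma limm_scal F c a : limm F a -> limm (fun x => c * F x) (c * a).
Proof.
  intros H1 eps He. destruct (H1 (eps / (Rabs c + 1))) as [M1 HM1].
  { apply Rdiv_lt_0_compat; auto. pose proof (Rabs_pos c); lra. }
  exists M1. intros x Hx. specialize (HM1 x Hx).
  replace (c * F x - c * a) with (c * (F x - a)) by ring. rewrite Rabs_mult.
  pose proof (Rabs_pos c). pose proof (Rabs_pos (F x - a)).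
  assert (Rabs (F x - a) * (Rabs c + 1) < eps).
  { apply (Rmult_lt_compat_r (Rabs c + 1)) in HM1; [|lra]. unfold Rdiv in HM1. rewrite Rmult_assoc, Rinv_l in HM1; lra. }
  nra.
Qed.
Lemma limp_ext F G a : (forall x, F x = G x) -> limp F a -> limp G a.
Proof. intros E H eps He. destruct (H eps He) as [M HM]. exists M. intros. rewrite <- E. auto. Qed.
Lemma limm_ext F G a : (forall x, F x = G x) -> limm F a -> limm G a.
Proof. intros E H eps He. destruct (H eps He) as [M HM]. exists M. intros. rewrite <- E. auto. Qed.

Lemma lim_mono (F : R -> R) B : (forall a b, a <= b -> F a <= F b) ->
  (forall a b, a <= b -> F b - F a <= B) -> exists Lp Lm, limp F Lp /\ limm F Lm.
Proof.
  intros Hm Hb.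
  destruct (completeness (fun y => exists x, y = F x)) as [L [HL1 HL2]].
  { exists (F 0 + B). intros y [x ->]. destruct (Rle_dec 0 x).
    - specialize (Hb 0 x r); lra.
    - specialize (Hm x 0 ltac:(lra)). specialize (Hb 0 0 ltac:(lra)). lra. }
  { exists (F 0); exists 0; auto. }
  destruct (completeness (fun y => exists x, y = - F x)) as [L' [HL1' HL2']].
  { exists (- F 0 + B). intros y [x ->]. destruct (Rle_dec x 0).
    - specialize (Hb x 0 r); lra.
    - specialize (Hm 0 x ltac:(lra)). specialize (Hb 0 0 ltac:(lra)). lra. }
  { exists (- F 0); exists 0; auto. }
  exists L, (- L'). split.
  - intros eps He. destruct (Rle_dec L (L - eps + 0)) as [?|Hn]; [lra|].
    assert (exists x0, L - eps < F x0) as [x0 Hx0].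
    { apply Rnot_le_lt in Hn. destruct (Classical_Prop.classic (exists x0, L - eps < F x0)) as [?|Hno]; auto.
      exfalso. assert (L <= L - eps); [|lra]. apply HL2. intros y [x ->].
      destruct (Rle_dec (F x) (L - eps)); auto. exfalso; apply Hno; exists x; lra. }
    exists x0. intros x Hx. assert (F x <= L) by (apply HL1; exists x; auto).
    specialize (Hm x0 x ltac:(lra)). apply Rabs_def1; lra.
  - intros eps He.
    assert (exists x0, L' - eps < - F x0) as [x0 Hx0].
    { destruct (Classical_Prop.classic (exists x0, L' - eps < - F x0)) as [?|Hno]; auto.
      exfalso. assert (L' <= L' - eps); [|lra]. apply HL2'. intros y [x ->].
      destruct (Rle_dec (- F x) (L' - eps)); auto. exfalso; apply Hno; exists x; lra. }
    exists (- x0). intros x Hx. assert (- F x <= L') by (apply HL1'; exists x; auto).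
    specialize (Hm x x0 ltac:(lra)). apply Rabs_def1; lra.
Qed.

Lemma impr_of (f Q : R -> R) Lp Lm : (forall x, continuity_pt f x) ->
  (forall x, derivable_pt_lim Q x (f x)) -> limp Q Lp -> limm Q Lm ->
  improper_int f (Lp - Lm).
Proof.
  intros Hc Hd H1 H2. exists (ri_cont f Hc). intros eps He.
  destruct (H1 (eps/2)) as [M1 HM1]; [lra|]. destruct (H2 (eps/2)) as [M2 HM2]; [lra|].
  exists (Rmax M1 M2). intros a b Ha Hb. pose proof (Rmax_l M1 M2). pose proof (Rmax_r M1 M2).
  rewrite (FTC f Q Hc Hd). specialize (HM1 b ltac:(lra)). specialize (HM2 a ltac:(lra)).
  apply Rabs_def2 in HM1; apply Rabs_def2 in HM2. apply Rabs_def1; lra.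
Qed.

Lemma impr_unique (f Q : R -> R) Lp Lm l : (forall x, continuity_pt f x) ->
  (forall x, derivable_pt_lim Q x (f x)) -> limp Q Lp -> limm Q Lm ->
  improper_int f l -> l = Lp - Lm.
Proof.
  intros Hc Hd H1 H2 [pr H3].
  cut (forall eps, 0 < eps -> Rabs (l - (Lp - Lm)) <= eps).
  { intros H. destruct (Req_dec l (Lp - Lm)); auto. exfalso.
    assert (0 < Rabs (l - (Lp - Lm))) by (apply Rabs_pos_lt; lra).
    specialize (H (Rabs (l - (Lp - Lm)) / 2) ltac:(lra)). lra. }
  intros eps He.
  destruct (H1 (eps/3)) as [M1 HM1]; [lra|]. destruct (H2 (eps/3)) as [M2 HM2]; [lra|].
  destruct (H3 (eps/3)) as [M3 HM3]; [lra|].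
  set (M := Rmax (Rmax M1 M2) M3).
  assert (M1 <= M /\ M2 <= M /\ M3 <= M) as [? [? ?]].
  { unfold M. pose proof (Rmax_l (Rmax M1 M2) M3). pose proof (Rmax_r (Rmax M1 M2) M3).
    pose proof (Rmax_l M1 M2). pose proof (Rmax_r M1 M2). lra. }
  specialize (HM3 (- M - 1) (M + 1) ltac:(lra) ltac:(lra)).
  rewrite (FTC f Q Hc Hd) in HM3.
  specialize (HM1 (M+1) ltac:(lra)). specialize (HM2 (-M-1) ltac:(lra)).
  apply Rabs_def2 in HM1; apply Rabs_def2 in HM2; apply Rabs_def2 in HM3.
  apply Rabs_le; lra.
Qed.

Lemma lim_incr_le (Q : R -> R) Lp Lm B : limp Q Lp -> limm Q Lm ->
  (forall a b, a <= 0 -> 0 <= b -> Q b - Q a <= B) -> Lp - Lm <= B.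
Proof.
  intros H1 H2 Hb. apply le_eps. intros eps He.
  destruct (H1 (eps/2)) as [M1 HM1]; [lra|]. destruct (H2 (eps/2)) as [M2 HM2]; [lra|].
  set (M := Rmax (Rmax M1 M2) 0).
  assert (M1 <= M /\ M2 <= M /\ 0 <= M) as [? [? ?]].
  { unfold M. pose proof (Rmax_l (Rmax M1 M2) 0). pose proof (Rmax_r (Rmax M1 M2) 0).
    pose proof (Rmax_l M1 M2). pose proof (Rmax_r M1 M2). lra. }
  specialize (HM1 (M+1) ltac:(lra)). specialize (HM2 (-M-1) ltac:(lra)).
  specialize (Hb (-M-1) (M+1) ltac:(lra) ltac:(lra)).
  apply Rabs_def2 in HM1; apply Rabs_def2 in HM2. lra.
Qed.

Lemma lim_le (f g F G : R -> R) Lpf Lmf Lpg Lmg :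
  (forall x, derivable_pt_lim F x (f x)) -> (forall x, derivable_pt_lim G x (g x)) ->
  (forall x, f x <= g x) -> limp F Lpf -> limm F Lmf -> limp G Lpg -> limm G Lmg ->
  Lpf - Lmf <= Lpg - Lmg.
Proof.
  intros Hf Hg Hle H1 H2 H3 H4.
  assert (Hl : limp (fun x => G x + (-1) * F x) (Lpg + -1 * Lpf)) by (apply limp_plus; auto; apply limp_scal; auto).
  assert (Hm : limm (fun x => G x + (-1) * F x) (Lmg + -1 * Lmf)) by (apply limm_plus; auto; apply limm_scal; auto).
  cut (0 <= (Lpg + -1 * Lpf) - (Lmg + -1 * Lmf)); [lra|].
  apply le_eps. intros eps He.
  destruct (Hl (eps/2)) as [M1 HM1]; [lra|]. destruct (Hm (eps/2)) as [M2 HM2]; [lra|].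
  set (M := Rmax (Rmax M1 M2) 0).
  assert (M1 <= M /\ M2 <= M /\ 0 <= M) as [? [? ?]].
  { unfold M. pose proof (Rmax_l (Rmax M1 M2) 0). pose proof (Rmax_r (Rmax M1 M2) 0).
    pose proof (Rmax_l M1 M2). pose proof (Rmax_r M1 M2). lra. }
  specialize (HM1 (M+1) ltac:(lra)). specialize (HM2 (-M-1) ltac:(lra)).
  assert (Hmono : (fun x => G x + -1 * F x) (-M-1) <= (fun x => G x + -1 * F x) (M+1)).
  { apply (mono_le (fun x => G x + -1 * F x) (fun x => g x + -1 * f x) (-M-1) (M+1)); [lra| |].
    - intros c _. apply derivable_pt_lim_plus; auto. apply derivable_pt_lim_scal. auto.
    - intros c _. specialize (Hle c). lra. }
  simpl in Hmono. apply Rabs_def2 in HM1; apply Rabs_def2 in HM2. lra.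
Qed.

Lemma impr_nonneg_le (W : R -> R) I : improper_int W I -> (forall x, 0 <= W x) ->
  forall a b (pr : Riemann_integrable W a b), a <= b -> RiemannInt pr <= I.
Proof.
  intros [pr0 H] Hnn a b pr Hab. apply le_eps. intros eps He.
  destruct (H eps He) as [M HM].
  set (a' := Rmin a (-M-1)). set (b' := Rmax b (M+1)).
  assert (a' <= a /\ a' < -M /\ b <= b' /\ M < b') as [? [? [? ?]]].
  { unfold a', b'. pose proof (Rmin_l a (-M-1)). pose proof (Rmin_r a (-M-1)).
    pose proof (Rmax_l b (M+1)). pose proof (Rmax_r b (M+1)). lra. }
  specialize (HM a' b' ltac:(lra) ltac:(lra)). apply Rabs_def2 in HM.
  assert (Hz : forall u v (q : Riemann_integrable W u v), u <= v -> 0 <= RiemannInt q).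
  { intros u v q Huv.
    cut (0 * (v - u) <= RiemannInt q); [lra|].
    rewrite <- (RiemannInt_P15 (RiemannInt_P14 u v 0)).
    apply RiemannInt_P19; auto; intros; unfold fct_cte; auto. }
  pose proof (pr0 a' a) as p1. pose proof (pr0 b b') as p3. pose proof (pr0 a' b) as p4.
  pose proof (RiemannInt_P26 p1 pr p4). pose proof (RiemannInt_P26 p4 p3 (pr0 a' b')).
  pose proof (Hz _ _ p1 ltac:(lra)). pose proof (Hz _ _ p3 ltac:(lra)). lra.
Qed.
Lemma conv_dom (f g Q G : R -> R) B :
  (forall x, derivable_pt_lim Q x (f x)) -> (forall x, derivable_pt_lim G x (g x)) ->
  (forall x, Rabs (f x) <= g x) -> (forall a b, a <= b -> G b - G a <= B) ->
  exists Lp Lm, limp Q Lp /\ limm Q Lm.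
Proof.
  intros HQ HG Hfg HB.
  assert (Hg0 : forall x, 0 <= g x) by (intro x; pose proof (Rabs_pos (f x)); specialize (Hfg x); lra).
  assert (Hf1 : forall x, - g x <= f x <= g x) by (intro x; specialize (Hfg x); pose proof (Rle_abs (f x)); pose proof (Rle_abs (- f x)); rewrite Rabs_Ropp in *; lra).
  destruct (lim_mono G B) as [Gp [Gm [HGp HGm]]]; auto.
  { intros a b Hab. apply (mono_le G g); auto. }
  destruct (lim_mono (fun x => Q x + G x) (2 * B)) as [Fp [Fm [HFp HFm]]].
  { intros a b Hab. apply (mono_le (fun x => Q x + G x) (fun x => f x + g x) a b); auto.
    - intros; apply derivable_pt_lim_plus; auto.
    - intros c _. specialize (Hf1 c). lra. }
  { intros a b Hab. specialize (HB a b Hab).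
    assert (2 * G a - (Q a + G a) <= 2 * G b - (Q b + G b)); [|lra].
    apply (mono_le (fun x => 2 * G x - (Q x + G x)) (fun x => 2 * g x - (f x + g x)) a b); auto.
    - intros; apply derivable_pt_lim_minus; [apply derivable_pt_lim_scal; auto|apply derivable_pt_lim_plus; auto].
    - intros c _. specialize (Hf1 c). lra. }
  exists (Fp + -1 * Gp), (Fm + -1 * Gm). split.
  - apply (limp_ext (fun x => (Q x + G x) + -1 * G x)); [intro; ring|].
    apply (limp_plus (fun x => Q x + G x) (fun x => -1 * G x)); auto. apply limp_scal; auto.
  - apply (limm_ext (fun x => (Q x + G x) + -1 * G x)); [intro; ring|].
    apply (limm_plus (fun x => Q x + G x) (fun x => -1 * G x)); auto. apply limm_scal; auto.
Qed.

Lemma incr_le (f Q : R -> R) l : (forall x, continuity_pt f x) -> (forall x, 0 <= f x) ->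
  (forall x, derivable_pt_lim Q x (f x)) -> improper_int f l ->
  forall a b, a <= b -> Q b - Q a <= l.
Proof.
  intros Hc Hnn Hd Hi a b Hab. rewrite <- (FTC f Q Hc Hd a b (ri_cont f Hc a b)).
  apply (impr_nonneg_le f l Hi Hnn); auto.
Qed.

Lemma deriv_sym (F F1 : R -> R) s : (forall x, derivable_pt_lim F x (F1 x)) ->
  (forall x, F (- x) = s * F x) -> forall x, F1 (- x) = - s * F1 x.
Proof.
  intros Hd Hs x.
  assert (H1 : derivable_pt_lim (fun y => F (- y)) x (F1 (- x) * (-1))).
  { apply (derivable_pt_lim_comp (fun y => - y) F x (-1) (F1 (-x))); [|apply Hd].
    replace (-1) with (- (1)) by ring. apply derivable_pt_lim_opp. apply derivable_pt_lim_id. }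
  assert (E : (fun y => F (- y)) = (fun y => s * F y)) by (apply functional_extensionality; auto).
  rewrite E in H1. assert (H2 : derivable_pt_lim (fun y => s * F y) x (s * F1 x)) by (apply derivable_pt_lim_scal; auto).
  pose proof (uniqueness_limite _ _ _ _ H1 H2). lra.
Qed.

Lemma concave_slope (V V1 : R -> R) R0 :
  (forall x, derivable_pt_lim V x (V1 x)) ->
  (forall x y t, R0 < x -> R0 < y -> 0 <= t <= 1 ->
      t * V x + (1 - t) * V y <= V (t * x + (1 - t) * y)) ->
  forall x y, R0 < x < y -> V y - V x <= V1 x * (y - x).
Proof.
  intros Hd Hc x y [Hx Hxy].
  destruct (Rle_dec (V y - V x) (V1 x * (y - x))) as [|Hn]; auto. exfalso.
  set (sl := (V y - V x) / (y - x)).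
  assert (Hsl : V1 x < sl).
  { unfold sl. apply (Rmult_lt_reg_r (y - x)); [lra|]. unfold Rdiv. rewrite Rmult_assoc, Rinv_l by lra. lra. }
  destruct (Hd x (sl - V1 x) ltac:(lra)) as [[del Hdel] Hdd]. simpl in Hdd.
  set (s := Rmin (del/2) (y - x)).
  assert (0 < s /\ s <= y - x /\ s < del) as [Hs1 [Hs2 Hs3]].
  { unfold s. unfold Rmin. destruct (Rle_dec (del/2) (y-x)); lra. }
  specialize (Hdd s ltac:(lra) ltac:(rewrite Rabs_right; lra)).
  set (t := s / (y - x)).
  assert (Ht : 0 <= t <= 1).
  { unfold t. split. apply Rlt_le, Rdiv_lt_0_compat; lra.
    apply (Rmult_le_reg_r (y - x)); [lra|]. unfold Rdiv. rewrite Rmult_assoc, Rinv_l by lra. lra. }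
  specialize (Hc y x t ltac:(lra) Hx Ht).
  replace (t * y + (1 - t) * x) with (x + s) in Hc by (unfold t; field; lra).
  assert (V (x + s) - V x >= s * sl).
  { replace (s * sl) with (t * (V y - V x)) by (unfold t, sl; field; lra). lra. }
  apply Rabs_def2 in Hdd. destruct Hdd as [Hdd _].
  assert ((V (x + s) - V x) / s >= sl).
  { apply Rle_ge. apply (Rmult_le_reg_r s); auto. unfold Rdiv. rewrite Rmult_assoc, Rinv_l by lra. lra. }
  lra.
Qed.
Lemma dexp (V : R -> R) x l : derivable_pt_lim V x l ->
  derivable_pt_lim (fun y => exp (- V y)) x (- l * exp (- V x)).
Proof.
  intros H.
  assert (H1 : derivable_pt_lim (fun y => - V y) x (- l)) by (apply (derivable_pt_lim_opp V); auto).
  pose proof (derivable_pt_lim_comp (fun y => - V y) exp x (- l) (exp (- V x)) H1 (derivable_pt_lim_exp _)) as H2.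
  unfold comp in H2. replace (- l * exp (- V x)) with (exp (- V x) * - l) by ring. exact H2.
Qed.

Lemma ddiv (f g : R -> R) x l1 l2 : derivable_pt_lim f x l1 -> derivable_pt_lim g x l2 -> g x <> 0 ->
  derivable_pt_lim (fun z => f z / g z) x ((l1 * g x - f x * l2) / g x ^ 2).
Proof.
  intros H1 H2 H3. replace (g x ^ 2) with (Rsqr (g x)) by (unfold Rsqr; ring).
  replace (f x * l2) with (l2 * f x) by ring. apply (derivable_pt_lim_div f g x l1 l2); auto.
Qed.

Lemma dcont (F f : R -> R) : (forall x, derivable_pt_lim F x (f x)) -> forall x, continuity_pt F x.
Proof. intros H x. apply derivable_continuous_pt. exists (f x). apply H. Qed.

Lemma below_limp (F : R -> R) L : (forall a b, a <= b -> F a <= F b) -> limp F L -> forall x, F x <= L.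
Proof.
  intros Hm Hl x. apply le_eps. intros eps He. destruct (Hl eps He) as [M HM].
  set (y := Rmax x (M+1)). pose proof (Rmax_l x (M+1)). pose proof (Rmax_r x (M+1)).
  specialize (HM y ltac:(unfold y; lra)). apply Rabs_def2 in HM. specialize (Hm x y ltac:(unfold y; lra)). lra.
Qed.
Lemma above_limm (F : R -> R) L : (forall a b, a <= b -> F a <= F b) -> limm F L -> forall x, L <= F x.
Proof.
  intros Hm Hl x. apply le_eps. intros eps He. destruct (Hl eps He) as [M HM].
  set (y := Rmin x (-M-1)). pose proof (Rmin_l x (-M-1)). pose proof (Rmin_r x (-M-1)).
  specialize (HM y ltac:(unfold y; lra)). apply Rabs_def2 in HM. specialize (Hm y x ltac:(unfold y; lra)). lra.
Qed.

Definition om (S : R) (V1 : R -> R) (x : R) : R :=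
  if Rlt_dec S (Rabs x) then / Rabs (V1 x) else 1.

Lemma setup_V (V V1 V2 : R -> R) (R0 r : R)
  (hV1 : forall x, derivable_pt_lim V x (V1 x))
  (hV2 : forall x, derivable_pt_lim V1 x (V2 x))
  (hprob : improper_int (fun x => exp (- V x)) 1)
  (heven : forall x, V (- x) = V x)
  (hR0 : 0 < R0)
  (hconc : forall x y t, R0 < x -> R0 < y -> 0 <= t <= 1 ->
      t * V x + (1 - t) * V y <= V (t * x + (1 - t) * y))
  (hr : - / 2 < r)
  (hlim : forall eps, 0 < eps -> exists M, forall x, M < x ->
      Rabs (V2 x / (V1 x) ^ 2 - r) < eps) :
  exists S K1 P Lp Lm, R0 < S /\ 0 < K1 /\
    (forall x, derivable_pt_lim P x (exp (- V x))) /\ limp P Lp /\ limm P Lm /\ Lp - Lm = 1 /\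
    (forall x, Lm <= P x <= Lp) /\
    (forall x, 0 <= x -> Lp - P x <= K1 * exp (- V x) * om S V1 x) /\
    (forall x, x <= 0 -> P x - Lm <= K1 * exp (- V x) * om S V1 x) /\
    (forall x, S < Rabs x -> V1 x <> 0).
Proof.
  set (p := fun x => exp (- V x)).
  assert (Hpp : forall x, 0 < p x) by (intro; apply exp_pos).
  assert (Hpd : forall x, derivable_pt_lim p x (- V1 x * p x)) by (intro; apply dexp; auto).
  assert (Hpc : forall x, continuity_pt p x) by (apply (dcont p (fun x => - V1 x * p x)); auto).
  destruct (prim_exists p Hpc) as [P HP].
  assert (Hinc : forall a b, a <= b -> P b - P a <= 1).
  { apply (incr_le p P 1 Hpc); auto. intro; apply Rlt_le; auto. }
  assert (Hmon : forall a b, a <= b -> P a <= P b).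
  { intros a b Hab. apply (mono_le P p); auto. intros; apply Rlt_le; auto. }
  destruct (lim_mono P 1 Hmon Hinc) as [Lp [Lm [HLp HLm]]].
  assert (H1 : 1 = Lp - Lm) by (apply (impr_unique p P Lp Lm 1 Hpc HP HLp HLm hprob)).
  pose proof (below_limp P Lp Hmon HLp) as HPLp. pose proof (above_limm P Lm Hmon HLm) as HPLm.
  assert (Hodd : forall x, V1 (- x) = - V1 x).
  { intro x. rewrite (deriv_sym V V1 1 hV1); [ring|]. intro; rewrite heven; ring. }
  assert (Hev2 : forall x, V2 (- x) = V2 x).
  { intro x. rewrite (deriv_sym V1 V2 (-1) hV2); [ring|]. intro; rewrite Hodd; ring. }
  assert (Hpos : forall x, R0 < x -> 0 < V1 x).
  { intros x0 Hx0. destruct (Rlt_dec 0 (V1 x0)) as [|Hn]; auto. exfalso.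
    assert (Hge : forall y, x0 <= y -> p x0 <= p y).
    { intros y Hy. unfold p. destruct (Req_dec y x0) as [->|Hne]; [lra|].
      pose proof (concave_slope V V1 R0 hV1 hconc x0 y ltac:(lra)).
      assert (V y <= V x0) by nra. apply exp_le_exp. lra. }
    set (y := x0 + 2 / p x0).
    assert (Hy : x0 <= y) by (unfold y; pose proof (Hpp x0); apply Rlt_le in H; assert (0 <= 2 / p x0) by (apply Rlt_le, Rdiv_lt_0_compat; auto; lra); lra).
    assert (HH : P x0 - p x0 * x0 <= P y - p x0 * y).
    { apply (mono_le (fun z => P z - p x0 * z) (fun z => p z - p x0 * 1) x0 y Hy).
      - intros c _. apply derivable_pt_lim_minus; auto. apply derivable_pt_lim_scal, derivable_pt_lim_id.
      - intros c Hc. specialize (Hge c ltac:(lra)). lra. }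
    specialize (Hinc x0 y Hy).
    assert (p x0 * (y - x0) = 2) by (unfold y; field; specialize (Hpp x0); lra). lra. }
  set (e0 := (1 + r) / 2).
  destruct (hlim e0 ltac:(unfold e0; lra)) as [M0 HM0].
  set (S := Rmax (R0 + 1) (M0 + 1)).
  assert (HS1 : R0 + 1 <= S) by apply Rmax_l. assert (HS2 : M0 + 1 <= S) by apply Rmax_r.
  set (a := 2 / (1 + r)).
  assert (Ha : 0 < a) by (unfold a; apply Rdiv_lt_0_compat; lra).
  assert (Hkey : forall x, S <= x -> 0 < V1 x /\ 1 <= a * (1 + V2 x / V1 x ^ 2)).
  { intros x Hx. split; [apply Hpos; lra|]. specialize (HM0 x ltac:(lra)). apply Rabs_def2 in HM0.
    assert (Hr1 : 0 < 1 + r) by lra. unfold a, e0 in *.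
    set (q := V2 x / V1 x ^ 2) in *.
    apply (Rmult_le_reg_l ((1 + r)/2)); [lra|].
    replace ((1 + r) / 2 * (2 / (1 + r) * (1 + q))) with (1 + q) by (field; lra). lra. }
  assert (HR : forall x, S <= x -> Lp - P x <= a * (p x / V1 x)).
  { intros x Hx. apply le_eps. intros eps He. destruct (HLp eps He) as [M HM].
    set (y := Rmax x (M+1)). pose proof (Rmax_l x (M+1)). pose proof (Rmax_r x (M+1)).
    specialize (HM y ltac:(unfold y; lra)). apply Rabs_def2 in HM.
    assert (Hm : - (a * (p x / V1 x) + P x) <= - (a * (p y / V1 y) + P y)).
    { apply (mono_le (fun z => - (a * (p z / V1 z) + P z))
              (fun z => - (a * ((- V1 z * p z * V1 z - p z * V2 z) / (V1 z)^2) + p z)) x y ltac:(unfold y; lra)).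
      - intros c Hc. destruct (Hkey c ltac:(lra)) as [Hv _]. apply derivable_pt_lim_opp. apply derivable_pt_lim_plus; auto.
        apply derivable_pt_lim_scal. apply ddiv; auto. lra.
      - intros c Hc. destruct (Hkey c ltac:(lra)) as [Hv Hk]. specialize (Hpp c).
        replace (- (a * ((- V1 c * p c * V1 c - p c * V2 c) / V1 c ^ 2) + p c))
          with (p c * (a * (1 + V2 c / V1 c ^ 2) - 1)) by (field; lra). nra. }
    destruct (Hkey y ltac:(unfold y; lra)) as [Hvy _].
    assert (0 <= a * (p y / V1 y)) by (apply Rmult_le_pos; [lra|]; apply Rlt_le, Rdiv_lt_0_compat; auto).
    lra. }
  assert (HL : forall x, x <= - S -> P x - Lm <= a * (p x / - V1 x)).
  { assert (Hkey' : forall x, x <= - S -> 0 < - V1 x /\ 1 <= a * (1 + V2 x / V1 x ^ 2)).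
    { intros x Hx. destruct (Hkey (- x) ltac:(lra)) as [H3 H4]. rewrite Hodd, Hev2 in *.
      split; [lra|]. replace (V1 x ^ 2) with ((- V1 x)^2) by ring. auto. }
    intros x Hx. apply le_eps. intros eps He. destruct (HLm eps He) as [M HM].
    set (y := Rmin x (-M-1)). pose proof (Rmin_l x (-M-1)). pose proof (Rmin_r x (-M-1)).
    specialize (HM y ltac:(unfold y; lra)). apply Rabs_def2 in HM.
    assert (Hm : P x - a * (p x / - V1 x) <= P y - a * (p y / - V1 y)).
    { apply Ropp_le_cancel.
      apply (mono_le (fun z => - (P z - a * (p z / - V1 z)))
              (fun z => - (p z - a * ((- V1 z * p z * - V1 z - p z * - V2 z) / (- V1 z)^2))) y x ltac:(unfold y; lra)).
      - intros c Hc. destruct (Hkey' c ltac:(unfold y in *; lra)) as [Hv _]. apply derivable_pt_lim_opp. apply derivable_pt_lim_minus; auto.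
        apply derivable_pt_lim_scal. apply (ddiv p (fun z => - V1 z) c); auto; [|lra].
        apply (derivable_pt_lim_opp V1 c (V2 c)). auto.
      - intros c Hc. destruct (Hkey' c ltac:(unfold y in *; lra)) as [Hv Hk]. specialize (Hpp c).
        replace (- (p c - a * ((- V1 c * p c * - V1 c - p c * - V2 c) / (- V1 c) ^ 2)))
          with (p c * (a * (1 + V2 c / V1 c ^ 2) - 1)) by (field; lra). nra. }
    destruct (Hkey' y ltac:(unfold y; lra)) as [Hvy _].
    assert (0 <= a * (p y / - V1 y)) by (apply Rmult_le_pos; [lra|]; apply Rlt_le, Rdiv_lt_0_compat; auto).
    lra. }
  assert (HVc : forall x, continuity_pt V x) by (apply (dcont V V1); auto).
  destruct (continuity_ab_maj V (- S) S ltac:(lra) (fun c _ => HVc c)) as [xm [Hxm _]].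
  set (pmin := p xm).
  assert (Hpmin : forall x, - S <= x <= S -> pmin <= p x).
  { intros x Hx. unfold pmin, p. apply exp_le_exp. specialize (Hxm x Hx). lra. }
  assert (Hpm0 : 0 < pmin) by apply Hpp.
  set (K1 := Rmax a (/ pmin)).
  assert (HK1a : a <= K1) by apply Rmax_l. assert (HK1b : / pmin <= K1) by apply Rmax_r.
  assert (Hipm : 0 < / pmin) by (apply Rinv_0_lt_compat; auto).
  exists S, K1, P, Lp, Lm. split; [lra|]. split; [lra|]. split; [exact HP|].
  split; [auto|]. split; [auto|]. split; [lra|]. split; [intro x; split; auto|].
  split; [|split].
  - intros x Hx. unfold om. fold (p x). destruct (Rlt_dec S (Rabs x)) as [Hs|Hs].
    + rewrite Rabs_right in Hs by lra. rewrite Rabs_right by (apply Rle_ge, Rlt_le, Hpos; lra).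
      specialize (HR x ltac:(lra)). destruct (Hkey x ltac:(lra)) as [Hv _].
      assert (0 <= p x / V1 x) by (apply Rlt_le, Rdiv_lt_0_compat; auto).
      unfold Rdiv in *. replace (K1 * p x * / V1 x) with (K1 * (p x * / V1 x)) by ring. nra.
    + rewrite Rabs_right in Hs by lra. assert (Hx2 : - S <= x <= S) by lra.
      specialize (Hpmin x Hx2). specialize (HPLm x).
      assert (K1 * pmin >= 1).
      { apply Rle_ge. replace 1 with (/ pmin * pmin) by (field; lra). nra. }
      nra.
  - intros x Hx. unfold om. fold (p x). destruct (Rlt_dec S (Rabs x)) as [Hs|Hs].
    + rewrite Rabs_left1 in Hs by lra.
      assert (Hv : 0 < - V1 x) by (rewrite <- Hodd; apply Hpos; lra).
      rewrite Rabs_left1 by lra.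
      specialize (HL x ltac:(lra)).
      assert (0 <= p x / - V1 x) by (apply Rlt_le, Rdiv_lt_0_compat; auto).
      unfold Rdiv in *. replace (K1 * p x * / - V1 x) with (K1 * (p x * / - V1 x)) by ring. nra.
    + rewrite Rabs_left1 in Hs by lra. assert (Hx2 : - S <= x <= S) by lra.
      specialize (Hpmin x Hx2). specialize (HPLp x).
      assert (K1 * pmin >= 1).
      { apply Rle_ge. replace 1 with (/ pmin * pmin) by (field; lra). nra. }
      nra.
  - intros x Hx. destruct (Rle_dec 0 x).
    + rewrite Rabs_right in Hx by lra. destruct (Hkey x ltac:(lra)). lra.
    + rewrite Rabs_left in Hx by lra. rewrite <- (Ropp_involutive x), Hodd.
      destruct (Hkey (-x) ltac:(lra)). lra.
Qed.
Lemma cmul (f g : R -> R) x : continuity_pt f x -> continuity_pt g x -> continuity_pt (fun y => f y * g y) x.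
Proof. intros; apply (continuity_pt_mult f g); auto. Qed.
Lemma cplus (f g : R -> R) x : continuity_pt f x -> continuity_pt g x -> continuity_pt (fun y => f y + g y) x.
Proof. intros; apply (continuity_pt_plus f g); auto. Qed.
Lemma cminus (f g : R -> R) x : continuity_pt f x -> continuity_pt g x -> continuity_pt (fun y => f y - g y) x.
Proof. intros; apply (continuity_pt_minus f g); auto. Qed.
Lemma copp (f : R -> R) x : continuity_pt f x -> continuity_pt (fun y => - f y) x.
Proof. intros; apply (continuity_pt_opp f); auto. Qed.
Lemma cconst (c : R) x : continuity_pt (fun _ => c) x.
Proof. apply continuity_pt_const. intros a b; auto. Qed.
Lemma cid x : continuity_pt (fun y => y) x.
Proof. apply derivable_continuous_pt. apply derivable_pt_id. Qed.
Lemma cdiv (f g : R -> R) x : continuity_pt f x -> continuity_pt g x -> g x <> 0 -> continuity_pt (fun y => f y / g y) x.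
Proof. intros; apply (continuity_pt_div f g); auto. Qed.
Lemma cabs (f : R -> R) x : continuity_pt f x -> continuity_pt (fun y => Rabs (f y)) x.
Proof. intros H. apply (continuity_pt_comp f Rabs); auto. apply Rcontinuity_abs. Qed.
Lemma cpow2 (f : R -> R) x : continuity_pt f x -> continuity_pt (fun y => f y ^ 2) x.
Proof.
  intros H. assert (E : (fun y => f y ^ 2) = (fun y => f y * f y)) by (apply functional_extensionality; intro; ring).
  rewrite E. apply cmul; auto.
Qed.

Ltac cont := repeat first [ assumption | match goal with H : forall _, continuity_pt _ _ |- _ => apply H end | apply cconst | apply cid | apply cmul | apply cplus | apply cminus | apply copp | apply cabs | apply cpow2 ].

Lemma smooth_cont (g g1 : R -> R) : smooth g -> (forall x, derivable_pt_lim g x (g1 x)) ->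
  forall x, continuity_pt g1 x.
Proof.
  intros [D [HD0 HD]] Hg.
  assert (E : D O = g) by (apply functional_extensionality; auto).
  assert (E1 : D 1%nat = g1).
  { apply functional_extensionality; intro x. pose proof (HD O x) as H. rewrite E in H.
    apply (uniqueness_limite g x); auto. }
  rewrite <- E1. apply (dcont (D 1%nat) (D 2%nat)). auto.
Qed.

Lemma tw_nonneg S w x : 0 <= w -> 0 <= tail_weight S w x.
Proof.
  intros H. unfold tail_weight. destruct (Rlt_dec S (Rabs x)); [|lra].
  destruct (Req_dec w 0) as [->|Hn]; [rewrite Rinv_0; lra|]. apply Rlt_le, Rinv_0_lt_compat. lra.
Qed.

Lemma wt2 S (V1 : R -> R) K1 q p x : 0 <= q -> q <= K1 * p * om S V1 x -> 0 < p -> 0 < K1 ->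
  (S < Rabs x -> V1 x <> 0) ->
  q * q / p <= K1 ^ 2 * (1 + tail_weight S (V1 x ^ 2) x) * p.
Proof.
  intros Hq Hqb Hp HK Hnz. unfold om, tail_weight in *.
  destruct (Rlt_dec S (Rabs x)) as [Hs|Hs].
  - specialize (Hnz Hs). assert (Ha : 0 < Rabs (V1 x)) by (apply Rabs_pos_lt; auto).
    set (iv := / Rabs (V1 x)) in *.
    assert (Hiv : 0 < iv) by (apply Rinv_0_lt_compat; auto).
    assert (E : / V1 x ^ 2 = iv * iv).
    { unfold iv. rewrite <- Rinv_mult. f_equal. rewrite <- Rabs_mult. rewrite Rabs_right; [ring|].
      apply Rle_ge. replace (V1 x * V1 x) with (V1 x ^ 2) by ring. apply pow2_ge_0. }
    rewrite E.
    assert (q * q <= (K1 * p * iv) * (K1 * p * iv)) by (apply Rmult_le_compat; auto).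
    apply (Rmult_le_reg_r p); auto. unfold Rdiv. rewrite Rmult_assoc, Rinv_l by lra.
    assert (0 <= K1 ^ 2 * p * p) by (apply Rmult_le_pos; [apply Rmult_le_pos|]; try apply pow2_ge_0; lra). nra.
  - assert (q * q <= (K1 * p * 1) * (K1 * p * 1)) by (apply Rmult_le_compat; auto).
    apply (Rmult_le_reg_r p); auto. unfold Rdiv. rewrite Rmult_assoc, Rinv_l by lra. nra.
Qed.

Lemma wt1 S (V1 : R -> R) K1 q p x : q <= K1 * p * om S V1 x -> 0 < p -> 0 < K1 ->
  q <= K1 * (1 + tail_weight S (Rabs (V1 x)) x) * p.
Proof.
  intros Hqb Hp HK. unfold om, tail_weight in *.
  destruct (Rlt_dec S (Rabs x)) as [Hs|Hs].
  - assert (0 <= / Rabs (V1 x)).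
    { destruct (Req_dec (Rabs (V1 x)) 0) as [E|E]; [rewrite E, Rinv_0; lra|].
      apply Rlt_le, Rinv_0_lt_compat. pose proof (Rabs_pos (V1 x)); lra. }
    nra.
  - nra.
Qed.
Lemma pw_ineq h g1 T p : 0 < p -> 2 * h * g1 * T <= / 2 * (h * h * p) + 2 * (g1 * g1 * (T * T / p)).
Proof.
  intros Hp. set (u := g1 * T / p).
  assert (E1 : g1 * g1 * (T * T / p) = u * u * p) by (unfold u; field; lra).
  assert (E2 : 2 * h * g1 * T = 2 * h * u * p) by (unfold u; field; lra).
  rewrite E1, E2. assert (0 <= (h - 2 * u) * (h - 2 * u) * p) by (apply Rmult_le_pos; [apply Rle_0_sqr|lra]). nra.
Qed.

Lemma energy_right (h g1 p T Q2 Q4 : R -> R) :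
  (forall x, derivable_pt_lim h x (g1 x)) -> (forall x, derivable_pt_lim T x (- p x)) ->
  (forall x, continuity_pt g1 x) -> (forall x, continuity_pt p x) ->
  (forall x, 0 < p x) -> (forall x, 0 <= x -> 0 <= T x) -> h 0 = 0 ->
  (forall x, derivable_pt_lim Q2 x (h x * h x * p x)) ->
  (forall x, derivable_pt_lim Q4 x (g1 x * g1 x * (T x * T x / p x))) ->
  forall b, 0 <= b -> Q2 b - Q2 0 <= 4 * (Q4 b - Q4 0).
Proof.
  intros Hh HT Hg1c Hpc Hp HT0 Hh0 HQ2 HQ4 b Hb.
  assert (Hhc : forall x, continuity_pt h x) by (apply (dcont h g1); auto).
  assert (HTc : forall x, continuity_pt T x) by (apply (dcont T (fun x => - p x)); auto).
  destruct (prim_exists (fun x => 2 * h x * g1 x * T x)) as [Q3 HQ3].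
  { intro x. cont. }
  assert (E : (fun x => Q2 x + h x * h x * T x - Q3 x) 0 = (fun x => Q2 x + h x * h x * T x - Q3 x) b).
  { apply (const_deriv0 (fun x => Q2 x + h x * h x * T x - Q3 x)). intro x.
    replace 0 with (h x * h x * p x + ((g1 x * h x + h x * g1 x) * T x + h x * h x * - p x) - 2 * h x * g1 x * T x) by ring.
    apply derivable_pt_lim_minus; auto. apply derivable_pt_lim_plus; auto.
    apply (derivable_pt_lim_mult (fun x => h x * h x) T); auto.
    apply (derivable_pt_lim_mult h h); auto. }
  simpl in E. rewrite Hh0 in E.
  assert (Hm : (fun x => Q2 x + 4 * Q4 x - 2 * Q3 x) 0 <= (fun x => Q2 x + 4 * Q4 x - 2 * Q3 x) b).
  { apply (mono_le (fun x => Q2 x + 4 * Q4 x - 2 * Q3 x)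
       (fun x => h x * h x * p x + 4 * (g1 x * g1 x * (T x * T x / p x)) - 2 * (2 * h x * g1 x * T x)) 0 b Hb).
    - intros c _. apply derivable_pt_lim_minus; [apply derivable_pt_lim_plus|]; auto; apply derivable_pt_lim_scal; auto.
    - intros c _. pose proof (pw_ineq (h c) (g1 c) (T c) (p c) (Hp c)). lra. }
  simpl in Hm.
  assert (0 <= h b * h b * T b) by (apply Rmult_le_pos; [apply Rle_0_sqr|auto]). lra.
Qed.

Lemma energy_left (h g1 p U Q2 Q4 : R -> R) :
  (forall x, derivable_pt_lim h x (g1 x)) -> (forall x, derivable_pt_lim U x (p x)) ->
  (forall x, continuity_pt g1 x) -> (forall x, continuity_pt p x) ->
  (forall x, 0 < p x) -> (forall x, x <= 0 -> 0 <= U x) -> h 0 = 0 ->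
  (forall x, derivable_pt_lim Q2 x (h x * h x * p x)) ->
  (forall x, derivable_pt_lim Q4 x (g1 x * g1 x * (U x * U x / p x))) ->
  forall a, a <= 0 -> Q2 0 - Q2 a <= 4 * (Q4 0 - Q4 a).
Proof.
  intros Hh HT Hg1c Hpc Hp HT0 Hh0 HQ2 HQ4 a Ha.
  assert (Hhc : forall x, continuity_pt h x) by (apply (dcont h g1); auto).
  assert (HTc : forall x, continuity_pt U x) by (apply (dcont U p); auto).
  destruct (prim_exists (fun x => 2 * h x * g1 x * U x)) as [Q3 HQ3].
  { intro x. cont. }
  assert (E : (fun x => Q2 x - h x * h x * U x + Q3 x) a = (fun x => Q2 x - h x * h x * U x + Q3 x) 0).
  { apply (const_deriv0 (fun x => Q2 x - h x * h x * U x + Q3 x)). intro x.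
    replace 0 with (h x * h x * p x - ((g1 x * h x + h x * g1 x) * U x + h x * h x * p x) + 2 * h x * g1 x * U x) by ring.
    apply derivable_pt_lim_plus; auto. apply derivable_pt_lim_minus; auto.
    apply (derivable_pt_lim_mult (fun x => h x * h x) U); auto.
    apply (derivable_pt_lim_mult h h); auto. }
  simpl in E. rewrite Hh0 in E.
  assert (Hm : (fun x => Q2 x + 4 * Q4 x + 2 * Q3 x) a <= (fun x => Q2 x + 4 * Q4 x + 2 * Q3 x) 0).
  { apply (mono_le (fun x => Q2 x + 4 * Q4 x + 2 * Q3 x)
       (fun x => h x * h x * p x + 4 * (g1 x * g1 x * (U x * U x / p x)) + 2 * (2 * h x * g1 x * U x)) a 0 Ha).
    - intros c _. apply derivable_pt_lim_plus; [apply derivable_pt_lim_plus|]; auto; apply derivable_pt_lim_scal; auto.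
    - intros c _. pose proof (pw_ineq (h c) (- g1 c) (U c) (p c) (Hp c)).
      replace (- g1 c * - g1 c) with (g1 c * g1 c) in H by ring. lra. }
  simpl in Hm. assert (0 <= h a * h a * U a) by (apply Rmult_le_pos; [apply Rle_0_sqr|auto]). lra.
Qed.

Lemma l1_right (h g1 p T Q5 Q7 : R -> R) :
  (forall x, derivable_pt_lim h x (g1 x)) -> (forall x, derivable_pt_lim T x (- p x)) ->
  (forall x, continuity_pt g1 x) -> (forall x, continuity_pt p x) ->
  (forall x, 0 < p x) -> (forall x, 0 <= x -> 0 <= T x) -> h 0 = 0 ->
  (forall x, derivable_pt_lim Q5 x (Rabs (h x) * p x)) ->
  (forall x, derivable_pt_lim Q7 x (Rabs (g1 x) * T x)) ->
  forall b, 0 <= b -> Q5 b - Q5 0 <= Q7 b - Q7 0.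
Proof.
  intros Hh HT Hg1c Hpc Hp HT0 Hh0 HQ5 HQ7 b Hb.
  assert (Hhc : forall x, continuity_pt h x) by (apply (dcont h g1); auto).
  assert (HTc : forall x, continuity_pt T x) by (apply (dcont T (fun x => - p x)); auto).
  destruct (prim_exists (fun x => Rabs (g1 x))) as [A HA]; [intro; cont|].
  set (Hh' := fun x => A x - A 0).
  assert (HdH : forall x, derivable_pt_lim Hh' x (Rabs (g1 x))).
  { intro x. replace (Rabs (g1 x)) with (Rabs (g1 x) - 0) by ring. apply derivable_pt_lim_minus; auto.
    apply derivable_pt_lim_const. }
  assert (Hbnd : forall x, 0 <= x -> Rabs (h x) <= Hh' x).
  { intros x Hx.
    assert (H1 : (fun y => Hh' y - h y) 0 <= (fun y => Hh' y - h y) x).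
    { apply (mono_le (fun y => Hh' y - h y) (fun y => Rabs (g1 y) - g1 y) 0 x Hx).
      - intros; apply derivable_pt_lim_minus; auto.
      - intros c _. pose proof (Rle_abs (g1 c)); lra. }
    assert (H2 : (fun y => Hh' y + h y) 0 <= (fun y => Hh' y + h y) x).
    { apply (mono_le (fun y => Hh' y + h y) (fun y => Rabs (g1 y) + g1 y) 0 x Hx).
      - intros; apply derivable_pt_lim_plus; auto.
      - intros c _. pose proof (Rle_abs (- g1 c)); rewrite Rabs_Ropp in *; lra. }
    simpl in H1, H2. unfold Hh' in *. rewrite Hh0 in *. apply Rabs_le; lra. }
  assert (HHc : forall x, continuity_pt Hh' x) by (apply (dcont Hh' (fun x => Rabs (g1 x))); auto).
  destruct (prim_exists (fun x => Hh' x * p x)) as [Q6 HQ6]; [intro; cont|].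
  assert (E : (fun x => Q6 x + Hh' x * T x - Q7 x) 0 = (fun x => Q6 x + Hh' x * T x - Q7 x) b).
  { apply (const_deriv0 (fun x => Q6 x + Hh' x * T x - Q7 x)). intro x.
    replace 0 with (Hh' x * p x + (Rabs (g1 x) * T x + Hh' x * - p x) - Rabs (g1 x) * T x) by ring.
    apply derivable_pt_lim_minus; auto. apply derivable_pt_lim_plus; auto.
    apply (derivable_pt_lim_mult Hh' T); auto. }
  simpl in E.
  assert (Hm : (fun x => Q6 x - Q5 x) 0 <= (fun x => Q6 x - Q5 x) b).
  { apply (mono_le (fun x => Q6 x - Q5 x) (fun x => Hh' x * p x - Rabs (h x) * p x) 0 b Hb).
    - intros; apply derivable_pt_lim_minus; auto.
    - intros c Hc. specialize (Hbnd c ltac:(lra)). specialize (Hp c). nra. }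
  simpl in Hm. assert (Hh'0 : Hh' 0 = 0) by (unfold Hh'; ring). rewrite Hh'0 in E.
  assert (0 <= Hh' b * T b).
  { apply Rmult_le_pos; auto. specialize (Hbnd b Hb). pose proof (Rabs_pos (h b)). lra. }
  lra.
Qed.

Lemma l1_left (h g1 p U Q5 Q7 : R -> R) :
  (forall x, derivable_pt_lim h x (g1 x)) -> (forall x, derivable_pt_lim U x (p x)) ->
  (forall x, continuity_pt g1 x) -> (forall x, continuity_pt p x) ->
  (forall x, 0 < p x) -> (forall x, x <= 0 -> 0 <= U x) -> h 0 = 0 ->
  (forall x, derivable_pt_lim Q5 x (Rabs (h x) * p x)) ->
  (forall x, derivable_pt_lim Q7 x (Rabs (g1 x) * U x)) ->
  forall a, a <= 0 -> Q5 0 - Q5 a <= Q7 0 - Q7 a.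
Proof.
  intros Hh HT Hg1c Hpc Hp HT0 Hh0 HQ5 HQ7 a Ha.
  assert (Hhc : forall x, continuity_pt h x) by (apply (dcont h g1); auto).
  assert (HTc : forall x, continuity_pt U x) by (apply (dcont U p); auto).
  destruct (prim_exists (fun x => Rabs (g1 x))) as [A HA]; [intro; cont|].
  set (Hh' := fun x => A x - A 0).
  assert (HdH : forall x, derivable_pt_lim Hh' x (Rabs (g1 x))).
  { intro x. replace (Rabs (g1 x)) with (Rabs (g1 x) - 0) by ring. apply derivable_pt_lim_minus; auto.
    apply derivable_pt_lim_const. }
  assert (Hbnd : forall x, x <= 0 -> Rabs (h x) <= - Hh' x).
  { intros x Hx.
    assert (H1 : (fun y => Hh' y - h y) x <= (fun y => Hh' y - h y) 0).
    { apply (mono_le (fun y => Hh' y - h y) (fun y => Rabs (g1 y) - g1 y) x 0 Hx).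
      - intros; apply derivable_pt_lim_minus; auto.
      - intros c _. pose proof (Rle_abs (g1 c)); lra. }
    assert (H2 : (fun y => Hh' y + h y) x <= (fun y => Hh' y + h y) 0).
    { apply (mono_le (fun y => Hh' y + h y) (fun y => Rabs (g1 y) + g1 y) x 0 Hx).
      - intros; apply derivable_pt_lim_plus; auto.
      - intros c _. pose proof (Rle_abs (- g1 c)); rewrite Rabs_Ropp in *; lra. }
    simpl in H1, H2. unfold Hh' in *. rewrite Hh0 in *. apply Rabs_le; lra. }
  assert (HHc : forall x, continuity_pt Hh' x) by (apply (dcont Hh' (fun x => Rabs (g1 x))); auto).
  destruct (prim_exists (fun x => - Hh' x * p x)) as [Q6 HQ6]; [intro; cont|].
  assert (E : (fun x => Q6 x + Hh' x * U x - Q7 x) a = (fun x => Q6 x + Hh' x * U x - Q7 x) 0).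
  { apply (const_deriv0 (fun x => Q6 x + Hh' x * U x - Q7 x)). intro x.
    replace 0 with (- Hh' x * p x + (Rabs (g1 x) * U x + Hh' x * p x) - Rabs (g1 x) * U x) by ring.
    apply derivable_pt_lim_minus; auto. apply derivable_pt_lim_plus; auto.
    apply (derivable_pt_lim_mult Hh' U); auto. }
  simpl in E.
  assert (Hm : (fun x => Q6 x - Q5 x) a <= (fun x => Q6 x - Q5 x) 0).
  { apply (mono_le (fun x => Q6 x - Q5 x) (fun x => - Hh' x * p x - Rabs (h x) * p x) a 0 Ha).
    - intros; apply derivable_pt_lim_minus; auto.
    - intros c Hc. specialize (Hbnd c ltac:(lra)). specialize (Hp c). nra. }
  simpl in Hm. assert (Hh'0 : Hh' 0 = 0) by (unfold Hh'; ring). rewrite Hh'0 in E.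
  assert (Hh' a * U a <= 0).
  { specialize (Hbnd a Ha). pose proof (Rabs_pos (h a)). specialize (HT0 a Ha). nra. }
  lra.
Qed.
Lemma int_cmp (f W Q : R -> R) c a b (prW : Riemann_integrable W a b) :
  (forall x, continuity_pt f x) -> (forall x, derivable_pt_lim Q x (f x)) -> 0 < c ->
  (forall x, a <= x <= b -> f x <= c * W x) -> a <= b -> Q b - Q a <= c * RiemannInt prW.
Proof.
  intros Hc Hd Hc0 Hle Hab.
  assert (Hc' : forall x, continuity_pt (fun y => / c * f y) x) by (intro; cont).
  assert (Hd' : forall x, derivable_pt_lim (fun y => / c * Q y) x (/ c * f x)) by (intro; apply derivable_pt_lim_scal; auto).
  pose proof (FTC _ _ Hc' Hd' a b (ri_cont _ Hc' a b)) as E.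
  assert (RiemannInt (ri_cont _ Hc' a b) <= RiemannInt prW).
  { apply RiemannInt_P19; auto. intros x Hx. specialize (Hle x ltac:(lra)).
    apply (Rmult_le_reg_l c); auto. rewrite <- Rmult_assoc, Rinv_r by lra. lra. }
  assert (/ c * Q b - / c * Q a <= RiemannInt prW) by lra.
  apply (Rmult_le_compat_l c) in H0; [|lra].
  replace (c * (/ c * Q b - / c * Q a)) with (Q b - Q a) in H0 by (field; lra). lra.
Qed.

Lemma median_bound (V h P Q5 : R -> R) (A : R -> Prop) d Lp Lm L5p L5m :
  (forall x, continuity_pt h x) -> (forall x, continuity_pt (fun y => exp (- V y)) x) ->
  (forall x, derivable_pt_lim P x (exp (- V x))) -> limp P Lp -> limm P Lm ->
  (forall x, Lm <= P x <= Lp) -> Lp - Lm = 1 ->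
  (forall x, derivable_pt_lim Q5 x (Rabs (h x) * exp (- V x))) -> limp Q5 L5p -> limm Q5 L5m ->
  0 < d -> measure_closed_ge V A (1/2) -> (forall x, A x -> d <= Rabs (h x)) ->
  d <= 2 * (L5p - L5m).
Proof.
  intros Hhc Hpc HP HLp HLm HPb H1 HQ5 H5p H5m Hd Hmeas HA.
  set (phi := fun x => (1 + / d * Rabs (h x) - Rabs (1 - / d * Rabs (h x))) * / 2).
  assert (Hphic : forall x, continuity_pt phi x) by (intro; unfold phi; cont).
  assert (Hid : 0 < / d) by (apply Rinv_0_lt_compat; auto).
  assert (Hphi01 : forall x, 0 <= phi x <= 1 /\ phi x <= / d * Rabs (h x)).
  { intro x. unfold phi. pose proof (Rabs_pos (h x)). assert (0 <= / d * Rabs (h x)) by nra.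
    destruct (Rle_dec (/ d * Rabs (h x)) 1).
    - rewrite (Rabs_right (1 - / d * Rabs (h x))) by lra. repeat split; lra.
    - rewrite (Rabs_left (1 - / d * Rabs (h x))) by lra. repeat split; lra. }
  assert (HA1 : forall x, A x -> phi x = 1).
  { intros x Ax. specialize (HA x Ax). unfold phi.
    assert (1 <= / d * Rabs (h x)).
    { apply (Rmult_le_reg_l d); auto. rewrite <- Rmult_assoc, Rinv_r by lra. lra. }
    rewrite (Rabs_left1 (1 - / d * Rabs (h x))) by lra. lra. }
  set (p := fun x => exp (- V x)) in *.
  assert (Hpp : forall x, 0 < p x) by (intro; apply exp_pos).
  destruct (prim_exists (fun x => phi x * p x)) as [Qf HQf]; [intro; cont|].
  destruct (conv_dom (fun x => phi x * p x) p Qf P 1) as [Lfp [Lfm [Hfp Hfm]]]; auto.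
  { intro x. destruct (Hphi01 x) as [[? ?] _]. specialize (Hpp x). rewrite Rabs_right by nra. nra. }
  { intros a b _. destruct (HPb a), (HPb b). lra. }
  assert (Himp := impr_of (fun x => phi x * p x) Qf Lfp Lfm ltac:(intro; cont) HQf Hfp Hfm).
  assert (Hm := Hmeas phi Hphic (fun x => proj1 (Hphi01 x)) HA1 _ Himp).
  assert (Hle := lim_le (fun x => phi x * p x) (fun x => / d * (Rabs (h x) * p x)) Qf (fun x => / d * Q5 x)
                   Lfp Lfm (/ d * L5p) (/ d * L5m) HQf ltac:(intro; apply derivable_pt_lim_scal; auto)).
  assert (Lfp - Lfm <= / d * L5p - / d * L5m).
  { apply Hle; auto.
    - intro x. destruct (Hphi01 x) as [_ ?]. specialize (Hpp x). nra.
    - apply limp_scal; auto.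
    - apply limm_scal; auto. }
  assert (1 / 2 <= / d * (L5p - L5m)) by lra.
  apply (Rmult_le_compat_l d) in H0; [|lra].
  replace (d * (/ d * (L5p - L5m))) with (L5p - L5m) in H0 by (field; lra). lra.
Qed.
Lemma incr_ext (F : R -> R) B : (forall a b, a <= b -> F a <= F b) ->
  (forall a b, a <= 0 -> 0 <= b -> F b - F a <= B) -> forall a b, a <= b -> F b - F a <= B.
Proof.
  intros Hm Hb a b Hab. specialize (Hb (Rmin a 0) (Rmax b 0) (Rmin_r a 0) (Rmax_r b 0)).
  pose proof (Hm (Rmin a 0) a (Rmin_l a 0)). pose proof (Hm b (Rmax b 0) (Rmax_l b 0)). lra.
Qed.

Lemma split_int (W : R -> R) I (pr : forall a b, Riemann_integrable W a b) :
  improper_int W I -> (forall x, 0 <= W x) -> forall a b, a <= 0 -> 0 <= b ->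
  RiemannInt (pr a 0) + RiemannInt (pr 0 b) <= I.
Proof.
  intros HI Hnn a b Ha Hb. rewrite (RiemannInt_P26 (pr a 0) (pr 0 b) (pr a b)).
  apply (impr_nonneg_le W I HI Hnn); lra.
Qed.

Lemma impr_nonneg_pos (W : R -> R) I : improper_int W I -> (forall x, 0 <= W x) -> 0 <= I.
Proof.
  intros HI Hnn. pose proof HI as [pr _].
  pose proof (impr_nonneg_le W I HI Hnn 0 0 (pr 0 0) ltac:(lra)). rewrite RiemannInt_P9 in H. auto.
Qed.

Lemma limp_lin F G a b al : limp F a -> limp G b -> limp (fun x => F x + al * G x) (a + al * b).
Proof. intros. apply (limp_plus F (fun x => al * G x)); auto. apply limp_scal; auto. Qed.
Lemma limm_lin F G a b al : limm F a -> limm G b -> limm (fun x => F x + al * G x) (a + al * b).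
Proof. intros. apply (limm_plus F (fun x => al * G x)); auto. apply limm_scal; auto. Qed.

Lemma limp0 : limp (fun _ => 0) 0.
Proof. intros eps He. exists 0. intros. rewrite Rminus_diag, Rabs_R0. auto. Qed.
Lemma limm0 : limm (fun _ => 0) 0.
Proof. intros eps He. exists 0. intros. rewrite Rminus_diag, Rabs_R0. auto. Qed.
Theorem mainTheorem7
  (V V1 V2 : R -> R) (R0 r : R)
  (hVsm : smooth V)
  (hV1 : forall x, derivable_pt_lim V x (V1 x))
  (hV2 : forall x, derivable_pt_lim V1 x (V2 x))
  (hprob : improper_int (fun x => exp (- V x)) 1)
  (heven : forall x, V (- x) = V x)
  (hR0 : 0 < R0)
  (hconc : forall x y t, R0 < x -> R0 < y -> 0 <= t <= 1 ->
      t * V x + (1 - t) * V y <= V (t * x + (1 - t) * y))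
  (hr : - / 2 < r)
  (hlim : forall eps, 0 < eps -> exists M, forall x, M < x ->
      Rabs (V2 x / (V1 x) ^ 2 - r) < eps) :
  exists S C, R0 < S /\ 0 < C /\
    forall g g1 : R -> R, smooth g ->
      (forall x, derivable_pt_lim g x (g1 x)) ->
      (forall I, improper_int
           (fun x => (g1 x) ^ 2 * (1 + tail_weight S ((V1 x) ^ 2) x) * exp (- V x)) I ->
         exists mean v,
           improper_int (fun x => g x * exp (- V x)) mean /\
           improper_int (fun x => (g x - mean) ^ 2 * exp (- V x)) v /\
           v <= C * I) /\
      (forall J m, improper_int
           (fun x => Rabs (g1 x) * (1 + tail_weight S (Rabs (V1 x)) x) * exp (- V x)) J ->
         is_median V g m ->
         exists a,
           improper_int (fun x => Rabs (g x - m) * exp (- V x)) a /\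
           a <= C * J).
Proof.
  destruct (setup_V V V1 V2 R0 r hV1 hV2 hprob heven hR0 hconc hr hlim)
    as [S [K1 [P [Lp [Lm [HS [HK1 [HP [HLp [HLm [H1 [HPb [HTR [HTL HV1nz]]]]]]]]]]]]]].
  assert (HK2 : 0 < K1 ^ 2) by (apply pow_lt; auto).
  exists S, (4 * K1 ^ 2 + 3 * K1). split; [lra|]. split; [lra|].
  intros g g1 hsm hg1.
  set (p := fun x => exp (- V x)).
  assert (Hpp : forall x, 0 < p x) by (intro; apply exp_pos).
  assert (Hpc : forall x, continuity_pt p x) by (apply (dcont p (fun x => - V1 x * p x)); intro; apply dexp; auto).
  assert (HP' : forall x, derivable_pt_lim P x (p x)) by exact HP.
  assert (Hg1c : forall x, continuity_pt g1 x) by (apply (smooth_cont g g1); auto).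
  assert (Hgc : forall x, continuity_pt g x) by (apply (dcont g g1); auto).
  set (h := fun x => g x - g 0).
  assert (Hh : forall x, derivable_pt_lim h x (g1 x)).
  { intro x. unfold h. replace (g1 x) with (g1 x - 0) by ring. apply derivable_pt_lim_minus; auto. apply derivable_pt_lim_const. }
  assert (Hh0 : h 0 = 0) by (unfold h; ring).
  assert (Hhc : forall x, continuity_pt h x) by (apply (dcont h g1); auto).
  set (T := fun x => Lp - P x).
  assert (HT : forall x, derivable_pt_lim T x (- p x)).
  { intro x. unfold T. replace (- p x) with (0 - p x) by ring. apply derivable_pt_lim_minus; auto. apply derivable_pt_lim_const. }
  set (U := fun x => P x - Lm).
  assert (HU : forall x, derivable_pt_lim U x (p x)).
  { intro x. unfold U. replace (p x) with (p x - 0) by ring. apply derivable_pt_lim_minus; auto. apply derivable_pt_lim_const. }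
  assert (HT0 : forall x, 0 <= T x) by (intro x; unfold T; destruct (HPb x); lra).
  assert (HU0 : forall x, 0 <= U x) by (intro x; unfold U; destruct (HPb x); lra).
  assert (HTc : forall x, continuity_pt T x) by (apply (dcont T (fun x => - p x)); auto).
  assert (HUc : forall x, continuity_pt U x) by (apply (dcont U p); auto).
  assert (HPinc : forall a b, a <= b -> P b - P a <= 1) by (intros a b _; destruct (HPb a), (HPb b); lra).
  assert (Hpnz : forall x, p x <> 0) by (intro x; specialize (Hpp x); lra).
  split.
  -
    intros I HI. pose proof HI as [prW _].
    set (W := fun x => g1 x ^ 2 * (1 + tail_weight S (V1 x ^ 2) x) * exp (- V x)) in *.
    assert (HWnn : forall x, 0 <= W x).
    { intro x. unfold W. apply Rmult_le_pos; [apply Rmult_le_pos|]; [apply pow2_ge_0| |apply Rlt_le, exp_pos].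
      pose proof (tw_nonneg S (V1 x ^ 2) x (pow2_ge_0 _)). lra. }
    assert (HI0 : 0 <= I) by (apply (impr_nonneg_pos W); auto).
    destruct (prim_exists (fun x => h x * h x * p x)) as [Q2 HQ2]; [intro; cont|].
    assert (HcT : forall x, continuity_pt (fun y => g1 y * g1 y * (T y * T y / p y)) x).
    { intro x. apply cmul; [cont|]. apply cdiv; [cont|auto|auto]. }
    assert (HcU : forall x, continuity_pt (fun y => g1 y * g1 y * (U y * U y / p y)) x).
    { intro x. apply cmul; [cont|]. apply cdiv; [cont|auto|auto]. }
    destruct (prim_exists _ HcT) as [Q4R HQ4R].
    destruct (prim_exists _ HcU) as [Q4L HQ4L].
    pose proof (energy_right h g1 p T Q2 Q4R Hh HT Hg1c Hpc Hpp (fun x _ => HT0 x) Hh0 HQ2 HQ4R) as ER.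
    pose proof (energy_left h g1 p U Q2 Q4L Hh HU Hg1c Hpc Hpp (fun x _ => HU0 x) Hh0 HQ2 HQ4L) as EL.
    assert (CR : forall b, 0 <= b -> Q4R b - Q4R 0 <= K1 ^ 2 * RiemannInt (prW 0 b)).
    { intros b Hb. apply (int_cmp _ W Q4R (K1 ^ 2) 0 b (prW 0 b) HcT HQ4R HK2); auto.
      intros x [Hx _].
      pose proof (wt2 S V1 K1 (T x) (p x) x (HT0 x) (HTR x Hx) (Hpp x) HK1 (HV1nz x)).
        unfold W. replace (g1 x ^ 2) with (g1 x * g1 x) by ring.
        replace (K1 ^ 2 * (g1 x * g1 x * (1 + tail_weight S (V1 x ^ 2) x) * exp (- V x)))
          with (g1 x * g1 x * (K1 ^ 2 * (1 + tail_weight S (V1 x ^ 2) x) * p x)) by (unfold p; ring).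
        apply Rmult_le_compat_l; [apply Rle_0_sqr|]. exact H. }
    assert (CL : forall a, a <= 0 -> Q4L 0 - Q4L a <= K1 ^ 2 * RiemannInt (prW a 0)).
    { intros a Ha. apply (int_cmp _ W Q4L (K1 ^ 2) a 0 (prW a 0) HcU HQ4L HK2); auto.
      intros x [_ Hx].
      pose proof (wt2 S V1 K1 (U x) (p x) x (HU0 x) (HTL x Hx) (Hpp x) HK1 (HV1nz x)).
      unfold W. replace (g1 x ^ 2) with (g1 x * g1 x) by ring.
      replace (K1 ^ 2 * (g1 x * g1 x * (1 + tail_weight S (V1 x ^ 2) x) * exp (- V x)))
        with (g1 x * g1 x * (K1 ^ 2 * (1 + tail_weight S (V1 x ^ 2) x) * p x)) by (unfold p; ring).
      apply Rmult_le_compat_l; [apply Rle_0_sqr|]. exact H. }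
    assert (HQ2m : forall a b, a <= b -> Q2 a <= Q2 b).
    { intros a b Hab. apply (mono_le Q2 (fun x => h x * h x * p x)); auto.
      intros c _. apply Rmult_le_pos; [apply Rle_0_sqr|apply Rlt_le; auto]. }
    assert (HQ2b : forall a b, a <= b -> Q2 b - Q2 a <= 4 * K1 ^ 2 * I).
    { apply incr_ext; auto. intros a b Ha Hb.
      specialize (ER b Hb). specialize (EL a Ha). specialize (CR b Hb). specialize (CL a Ha).
      pose proof (split_int W I prW HI HWnn a b Ha Hb). nra. }
    destruct (lim_mono Q2 _ HQ2m HQ2b) as [L2p [L2m [H2p H2m]]].
    assert (HL2 : L2p - L2m <= 4 * K1 ^ 2 * I).
    { apply (lim_incr_le Q2); auto. intros a b Ha Hb. apply HQ2b. lra. }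
    destruct (prim_exists (fun x => h x * p x)) as [Qh HQh]; [intro; cont|].
    destruct (conv_dom (fun x => h x * p x) (fun x => / 2 * (h x * h x * p x + p x)) Qh
                (fun x => / 2 * (Q2 x + P x)) (/ 2 * (4 * K1 ^ 2 * I + 1))) as [Lhp [Lhm [Hhp Hhm]]]; auto.
    { intro x. apply derivable_pt_lim_scal. apply derivable_pt_lim_plus; auto. }
    { intro x. rewrite Rabs_mult, (Rabs_right (p x)) by (apply Rle_ge, Rlt_le; auto).
      pose proof (Hpp x). assert (Rabs (h x) <= / 2 * (h x * h x + 1)).
      { pose proof (Rle_0_sqr (Rabs (h x) - 1)). unfold Rsqr in H0.
        replace (h x * h x) with (Rabs (h x) * Rabs (h x)) by (rewrite <- Rabs_mult; apply Rabs_right; apply Rle_ge, Rle_0_sqr). nra. }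
      nra. }
    { intros a b Hab. specialize (HQ2b a b Hab). specialize (HPinc a b Hab). lra. }
    set (Hm := Lhp - Lhm).
    exists (Hm + g 0), (L2p - L2m - Hm ^ 2).
    assert (Hg0 : g 0 * Lp - g 0 * Lm = g 0) by (rewrite <- Rmult_minus_distr_l, H1; ring).
    split; [|split].
    + replace (Hm + g 0) with ((Lhp + g 0 * Lp) - (Lhm + g 0 * Lm)) by (unfold Hm; lra).
      apply (impr_of _ (fun x => Qh x + g 0 * P x)).
      * intro x. cont.
      * intro x. cbv beta. replace (g x * exp (- V x)) with (h x * p x + g 0 * p x) by (unfold h, p; ring).
        apply derivable_pt_lim_plus; auto. apply derivable_pt_lim_scal; auto.
      * apply limp_lin; auto.
      * apply limm_lin; auto.
    + replace (L2p - L2m - Hm ^ 2) with ((L2p + (- 2 * Hm) * Lhp + Hm ^ 2 * Lp) - (L2m + (- 2 * Hm) * Lhm + Hm ^ 2 * Lm)).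
      2:{ assert (Hm ^ 2 * Lp - Hm ^ 2 * Lm = Hm ^ 2) by (rewrite <- Rmult_minus_distr_l, H1; ring).
          unfold Hm in *. nra. }
      apply (impr_of _ (fun x => Q2 x + (- 2 * Hm) * Qh x + Hm ^ 2 * P x)).
      * intro x. cont.
      * intro x. cbv beta.
        replace ((g x - (Hm + g 0)) ^ 2 * exp (- V x)) with (h x * h x * p x + (- 2 * Hm) * (h x * p x) + Hm ^ 2 * p x) by (unfold h, p; ring).
        apply derivable_pt_lim_plus; [apply derivable_pt_lim_plus|]; auto; apply derivable_pt_lim_scal; auto.
      * apply (limp_lin (fun x => Q2 x + (- 2 * Hm) * Qh x) P); auto. apply limp_lin; auto.
      * apply (limm_lin (fun x => Q2 x + (- 2 * Hm) * Qh x) P); auto. apply limm_lin; auto.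
    + assert (0 <= Hm ^ 2) by apply pow2_ge_0. assert (0 <= 3 * K1 * I) by (apply Rmult_le_pos; lra). nra.

  - intros J m HJ Hmed. pose proof HJ as [prJ _].
    set (Wj := fun x => Rabs (g1 x) * (1 + tail_weight S (Rabs (V1 x)) x) * exp (- V x)) in *.
    assert (HWnn : forall x, 0 <= Wj x).
    { intro x. unfold Wj. apply Rmult_le_pos; [apply Rmult_le_pos|]; [apply Rabs_pos| |apply Rlt_le, exp_pos].
      pose proof (tw_nonneg S (Rabs (V1 x)) x (Rabs_pos _)). lra. }
    assert (HJ0 : 0 <= J) by (apply (impr_nonneg_pos Wj); auto).
    destruct (prim_exists (fun x => Rabs (h x) * p x)) as [Q5 HQ5]; [intro; cont|].
    destruct (prim_exists (fun x => Rabs (g1 x) * T x)) as [Q7R HQ7R]; [intro; cont|].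
    destruct (prim_exists (fun x => Rabs (g1 x) * U x)) as [Q7L HQ7L]; [intro; cont|].
    pose proof (l1_right h g1 p T Q5 Q7R Hh HT Hg1c Hpc Hpp (fun x _ => HT0 x) Hh0 HQ5 HQ7R) as ER.
    pose proof (l1_left h g1 p U Q5 Q7L Hh HU Hg1c Hpc Hpp (fun x _ => HU0 x) Hh0 HQ5 HQ7L) as EL.
    assert (CR : forall b, 0 <= b -> Q7R b - Q7R 0 <= K1 * RiemannInt (prJ 0 b)).
    { intros b Hb. apply (int_cmp (fun x => Rabs (g1 x) * T x) Wj Q7R K1 0 b (prJ 0 b) ltac:(intro; cont) HQ7R HK1); auto.
      intros x [Hx _].
      pose proof (wt1 S V1 K1 (T x) (p x) x (HTR x Hx) (Hpp x) HK1).
      unfold Wj. replace (K1 * (Rabs (g1 x) * (1 + tail_weight S (Rabs (V1 x)) x) * exp (- V x)))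
        with (Rabs (g1 x) * (K1 * (1 + tail_weight S (Rabs (V1 x)) x) * p x)) by (unfold p; ring).
      apply Rmult_le_compat_l; [apply Rabs_pos|]. exact H. }
    assert (CL : forall a, a <= 0 -> Q7L 0 - Q7L a <= K1 * RiemannInt (prJ a 0)).
    { intros a Ha. apply (int_cmp (fun x => Rabs (g1 x) * U x) Wj Q7L K1 a 0 (prJ a 0) ltac:(intro; cont) HQ7L HK1); auto.
      intros x [_ Hx].
      pose proof (wt1 S V1 K1 (U x) (p x) x (HTL x Hx) (Hpp x) HK1).
      unfold Wj. replace (K1 * (Rabs (g1 x) * (1 + tail_weight S (Rabs (V1 x)) x) * exp (- V x)))
        with (Rabs (g1 x) * (K1 * (1 + tail_weight S (Rabs (V1 x)) x) * p x)) by (unfold p; ring).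
      apply Rmult_le_compat_l; [apply Rabs_pos|]. exact H. }
    assert (HQ5m : forall a b, a <= b -> Q5 a <= Q5 b).
    { intros a b Hab. apply (mono_le Q5 (fun x => Rabs (h x) * p x)); auto.
      intros c _. apply Rmult_le_pos; [apply Rabs_pos|apply Rlt_le; auto]. }
    assert (HQ5b : forall a b, a <= b -> Q5 b - Q5 a <= K1 * J).
    { apply incr_ext; auto. intros a b Ha Hb.
      specialize (ER b Hb). specialize (EL a Ha). specialize (CR b Hb). specialize (CL a Ha).
      pose proof (split_int Wj J prJ HJ HWnn a b Ha Hb). nra. }
    destruct (lim_mono Q5 _ HQ5m HQ5b) as [L5p [L5m [H5p H5m]]].
    assert (HL5 : L5p - L5m <= K1 * J).
    { apply (lim_incr_le Q5); auto. intros a b Ha Hb. apply HQ5b. lra. }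
    assert (HL50 : 0 <= L5p - L5m).
    { pose proof (lim_le (fun _ => 0) (fun x => Rabs (h x) * p x) (fun _ => 0) Q5 0 0 L5p L5m
        ltac:(intro; apply derivable_pt_lim_const) HQ5 ltac:(intro; apply Rmult_le_pos; [apply Rabs_pos|apply Rlt_le; auto])
        limp0 limm0 H5p H5m). lra. }
    set (d := Rabs (g 0 - m)).
    assert (Hd : d <= 2 * (L5p - L5m)).
    { destruct Hmed as [Hme1 Hme2].
      destruct (Rtotal_order (g 0) m) as [Hlt|[Heq|Hgt]].
      - unfold d. rewrite Rabs_left by lra.
        apply (median_bound V h P Q5 (fun x => m <= g x) (- (g 0 - m)) Lp Lm L5p L5m); auto; [lra|].
        intros x Hx. unfold h. rewrite Rabs_right by lra. lra.
      - unfold d. rewrite Heq, Rminus_diag, Rabs_R0. lra.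
      - unfold d. rewrite Rabs_right by lra.
        apply (median_bound V h P Q5 (fun x => g x <= m) (g 0 - m) Lp Lm L5p L5m); auto; [lra|].
        intros x Hx. unfold h. rewrite Rabs_left1 by lra. lra. }
    destruct (prim_exists (fun x => Rabs (g x - m) * p x)) as [Qa HQa]; [intro; cont|].
    destruct (conv_dom (fun x => Rabs (g x - m) * p x) (fun x => Rabs (h x) * p x + d * p x) Qa
                (fun x => Q5 x + d * P x) (K1 * J + d)) as [Lap [Lam [Hap Ham]]]; auto.
    { intro x. apply derivable_pt_lim_plus; auto. apply derivable_pt_lim_scal; auto. }
    { intro x. rewrite Rabs_mult, Rabs_Rabsolu, (Rabs_right (p x)) by (apply Rle_ge, Rlt_le; auto).
      assert (Rabs (g x - m) <= Rabs (h x) + d).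
      { unfold h, d. replace (g x - m) with ((g x - g 0) + (g 0 - m)) by ring. apply Rabs_triang. }
      pose proof (Hpp x). nra. }
    { intros a b Hab. specialize (HQ5b a b Hab). specialize (HPinc a b Hab).
      assert (0 <= d) by apply Rabs_pos. nra. }
    exists (Lap - Lam). split.
    + apply (impr_of _ Qa); auto. intro x. cont.
    + pose proof (lim_le (fun x => Rabs (g x - m) * p x) (fun x => Rabs (h x) * p x + d * p x) Qa
        (fun x => Q5 x + d * P x) Lap Lam (L5p + d * Lp) (L5m + d * Lm) HQa
        ltac:(intro; apply derivable_pt_lim_plus; auto; apply derivable_pt_lim_scal; auto)) as Hle.
      assert (Lap - Lam <= (L5p + d * Lp) - (L5m + d * Lm)).
      { apply Hle; auto.
        - intro x. assert (Rabs (g x - m) <= Rabs (h x) + d).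
          { unfold h, d. replace (g x - m) with ((g x - g 0) + (g 0 - m)) by ring. apply Rabs_triang. }
          pose proof (Hpp x). nra.
        - apply limp_lin; auto.
        - apply limm_lin; auto. }
      assert (d * Lp - d * Lm = d) by (rewrite <- Rmult_minus_distr_l, H1; ring).
      assert (0 <= 4 * K1 ^ 2 * J) by (apply Rmult_le_pos; lra). nra.
Qed.
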